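(* Let $D$ be an integral domain and $R=R(D)$. Let $\mathcal M$ be the poset (under inclusion) of multiplicative submonoids of $D$ and $\mathcal U$ the poset of subsets of $R$ that are unions of prime ideals of $R$. For $W\in\mathcal M$ set $\mathfrak p(W):=\bigcap_{f\in W\setminus\{0\}}\mathfrak p_f$, and for $S\in\mathcal U$ set $L(S):=\{0\neq x\in D\mid \frac1x\notin S\}\cup\{0\}$. Then: (a) for any $S\in\mathcal U$ and $W\in\mathcal M$, $W\subseteq L(S)\iff S\subseteq\mathfrak p(W)$; (b) $\mathfrak p(-)$ and $L(-)$ form an antitone Galois connection between $\mathcal M$ and $\mathcal U$; (c) for any $W\in\mathcal M$, $L(\mathfrak p(W))=G(W)$; (d) for any $f\in D\setminus\{0\}$, $L(\mathfrak p_f)=\bigcup_{e\in\mathbb N}G(f^e)$; (e) for any $\mathfrak q\in\operatorname{Spec}R$, $\mathfrak p(L(\mathfrak q))=\mathfrak q$; (f) for any subring $C$ of $D$ that is a regular factroid of $D$, $C=L(\mathfrak p(C))$. Hence $\mathfrak p(-)$ and $L(-)$ restrict to a one-to-one, order-reversing correspondence (Galois correspondence) between the subrings of $D$ that are regular factroids of $D$ and the prime ideals of $R$. Moreover, if $C$ and $\mathfrak q$ correspond in this way, then the composition of natural ring homomorphisms $R(C)\to R\to R/\mathfrak q$ is an isomorphism.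
   Context: For an integral domain $D$ with fraction field $F$, the reciprocal complement $R(D)$ is the subring of $F$ generated by all $1/d$, $d\in D\setminus\{0\}$ (for a subring $C\subseteq D$, $R(C)\subseteq R(D)$). For nonzero $f\in D$, $\mathfrak p_f$ denotes the unique prime ideal of $R(D)$ maximal with respect to not containing $1/f$. A factroid of $D$ is an additive subgroup $H$ of $D$ such that whenever $f,g\in D\setminus\{0\}$ with $fg\in H$, then $f,g\in H$. For $S\subseteq D$, $[S]_D$ is the smallest factroid of $D$ containing $S$. A factroid $H$ is regular if $\{y\in D\mid gy\in[gH]_D\}=H$ for every nonzero $g\in D$. For $S\subseteq D$, $G(S)$ is the intersection of all regular factroids of $D$ containing $S$, and $G(x):=G(\{x\})$. An antitone Galois connection means both maps are order-reversing and (a) holds. *)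

(* Defs.v *)
From HB Require Import structures.
From mathcomp Require Import all_boot all_algebra.
From mathcomp Require Import fraction.
Set Implicit Arguments.
Unset Strict Implicit.
Unset Printing Implicit Defensive.
Import GRing.Theory.
Local Open Scope ring_scope.

Definition incl {T : Type} (A B : T -> Prop) : Prop := forall x, A x -> B x.

Section Defs.
Variable D : idomainType.
Local Notation F := {fraction D}.

Definition emb (x : D) : F := FracField.tofrac x.

Inductive ring_gen (S : F -> Prop) : F -> Prop :=
| rg_base x : S x -> ring_gen S x
| rg_one : ring_gen S 1
| rg_opp x : ring_gen S x -> ring_gen S (- x)
| rg_add x y : ring_gen S x -> ring_gen S y -> ring_gen S (x + y)
| rg_mul x y : ring_gen S x -> ring_gen S y -> ring_gen S (x * y).

Definition RC (C : D -> Prop) : F -> Prop :=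
  ring_gen (fun x => exists c, [/\ C c, c != 0 & x = (emb c)^-1]).

Definition RD : F -> Prop := RC (fun _ => True).

Definition prime_ideal (P : F -> Prop) : Prop :=
  [/\ incl P RD, P 0,
      (forall x y, P x -> P y -> P (x + y)),
      (forall r x, RD r -> P x -> P (r * x))
    & (~ P 1 /\ (forall x y, RD x -> RD y -> P (x * y) -> P x \/ P y))].

Definition max_prime_avoiding (f : D) (P : F -> Prop) : Prop :=
  [/\ prime_ideal P, ~ P (emb f)^-1
    & forall Q, prime_ideal Q -> ~ Q (emb f)^-1 -> incl P Q -> incl Q P].

Definition mult_submonoid (W : D -> Prop) : Prop :=
  W 1 /\ (forall x y, W x -> W y -> W (x * y)).

Definition subring (C : D -> Prop) : Prop :=
  [/\ C 1, (forall x y, C x -> C y -> C (x - y)) & (forall x y, C x -> C y -> C (x * y))].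

Definition union_of_primes (S : F -> Prop) : Prop :=
  exists Fam : (F -> Prop) -> Prop,
    (forall P, Fam P -> prime_ideal P) /\
    (forall x, S x <-> exists P, Fam P /\ P x).

Definition pW (pf : D -> F -> Prop) (W : D -> Prop) : F -> Prop :=
  fun x => forall f, W f -> f != 0 -> pf f x.

Definition LS (S : F -> Prop) : D -> Prop :=
  fun x => (x != 0 /\ ~ S (emb x)^-1) \/ x = 0.

Definition factroid (H : D -> Prop) : Prop :=
  [/\ H 0, (forall x y, H x -> H y -> H (x - y))
    & forall f g, f != 0 -> g != 0 -> H (f * g) -> H f /\ H g].

Definition factroid_gen (S : D -> Prop) : D -> Prop :=
  fun x => forall H, factroid H -> incl S H -> H x.

Definition regular_factroid (H : D -> Prop) : Prop :=
  factroid H /\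
  forall g : D, g != 0 ->
    (fun y => factroid_gen (fun z => exists h, H h /\ z = g * h) (g * y)) = H.

Definition Gcl (S : D -> Prop) : D -> Prop :=
  fun x => forall H, regular_factroid H -> incl S H -> H x.

Definition Gx (x : D) : D -> Prop := Gcl (fun y => y = x).

End Defs.

(* Main.v *)
Require Import Defs.
From HB Require Import structures.
From mathcomp Require Import all_boot all_algebra.
From mathcomp Require Import fraction.
From mathcomp Require classical_sets.
From mathcomp Require Import ring.
From Stdlib Require Import Classical FunctionalExtensionality PropExtensionality.
Import GRing.Theory.
Local Open Scope ring_scope.
Set Implicit Arguments.
Unset Strict Implicit.

Section Work.
Variable D : idomainType.
Local Notation F := {fraction D}.
Local Notation u d := ((emb d)^-1).

Lemma emb0 : emb (0:D) = 0 :> F. Proof. by rewrite /emb tofrac0. Qed.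
Lemma emb1 : emb (1:D) = 1 :> F. Proof. by rewrite /emb tofrac1. Qed.
Lemma embM (x y : D) : emb (x * y) = emb x * emb y. Proof. by rewrite /emb tofracM. Qed.
Lemma embD (x y : D) : emb (x + y) = emb x + emb y. Proof. by rewrite /emb tofracD. Qed.
Lemma embN (x : D) : emb (- x) = - emb x. Proof. by rewrite /emb tofracN. Qed.
Lemma embB (x y : D) : emb (x - y) = emb x - emb y. Proof. by rewrite /emb tofracB. Qed.
Lemma embX (x : D) n : emb (x ^+ n) = emb x ^+ n. Proof. by rewrite /emb tofracXn. Qed.
Lemma emb_eq0 (x : D) : (emb x == 0) = (x == 0). Proof. by rewrite /emb tofrac_eq0. Qed.
Lemma emb_inj (x y : D) : emb x = emb y -> x = y.
Proof. by move=> h; apply/eqP; rewrite -/(emb x) -(tofrac_eq x y) -/(emb x) -/(emb y) h. Qed.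
Lemma emb_neq0 (x : D) : x != 0 -> emb x != 0. Proof. by rewrite emb_eq0. Qed.
Lemma uM (x y : D) : u (x * y) = u x * u y. Proof. by rewrite embM invfM. Qed.
Lemma uN (x : D) : u (- x) = - u x. Proof. by rewrite embN invrN. Qed.
Lemma u1 : u (1 : D) = 1. Proof. by rewrite emb1 invr1. Qed.
Lemma uX (x : D) n : u (x ^+ n) = (u x) ^+ n. Proof. by rewrite embX exprVn. Qed.

Lemma RD_u (d : D) : d != 0 -> RD (u d).
Proof. by move=> h; apply: rg_base; exists d; split. Qed.
Lemma RD_1 : @RD D 1. Proof. exact: rg_one. Qed.
Lemma RD_D (x y : F) : RD x -> RD y -> RD (x + y). Proof. exact: rg_add. Qed.
Lemma RD_M (x y : F) : RD x -> RD y -> RD (x * y). Proof. exact: rg_mul. Qed.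
Lemma RD_N (x : F) : RD x -> RD (- x). Proof. exact: rg_opp. Qed.
Lemma RD_0 : @RD D 0.
Proof. by have := RD_D RD_1 (RD_N RD_1); rewrite subrr. Qed.
Lemma RD_X (x : F) n : RD x -> RD (x ^+ n).
Proof. move=> h; elim: n => [|n IH]; first by rewrite expr0; apply: RD_1.
by rewrite exprS; apply: RD_M.
Qed.

Inductive Span (A : D -> Prop) : F -> Prop :=
| sp0 : Span A 0
| spu d : d != 0 -> A d -> Span A (u d)
| spN x : Span A x -> Span A (- x)
| spD x y : Span A x -> Span A y -> Span A (x + y).

Lemma Span_B A x y : Span A x -> Span A y -> Span A (x - y).
Proof. by move=> hx hy; apply: spD => //; apply: spN. Qed.

Lemma Span_mono (A B : D -> Prop) x : (forall d, d != 0 -> A d -> B d) -> Span A x -> Span B x.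
Proof.
move=> AB; elim=> [|d d0 Ad|z _ IH|z w _ IHz _ IHw]; first exact: sp0.
- by apply: spu => //; apply: AB.
- exact: spN.
- exact: spD.
Qed.

Lemma Span_mul (A B Cc : D -> Prop) :
  (forall a b, a != 0 -> b != 0 -> A a -> B b -> Cc (a * b)) ->
  forall x y, Span A x -> Span B y -> Span Cc (x * y).
Proof.
move=> ABC x y hx; elim: hx y => [|a a0 Aa|z _ IH|z w _ IHz _ IHw] y hy.
- by rewrite mul0r; apply: sp0.
- elim: hy => [|b b0 Bb|z _ IH|z w _ IHz _ IHw].
  + by rewrite mulr0; apply: sp0.
  + by rewrite -uM; apply: spu; [rewrite mulf_neq0|apply: ABC].
  + by rewrite mulrN; apply: spN.
  + by rewrite mulrDr; apply: spD.
- by rewrite mulNr; apply: spN; apply: IH.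
- by rewrite mulrDl; apply: spD; [apply: IHz|apply: IHw].
Qed.

Lemma Span_RD A x : Span A x -> RD x.
Proof.
elim=> [|d d0 _|z _ IH|z w _ IHz _ IHw]; first exact: RD_0.
- exact: RD_u.
- exact: RD_N.
- exact: RD_D.
Qed.

Lemma RD_Span x : RD x -> Span (fun _ => True) x.
Proof.
elim=> [y [c [_ c0 ->]]||z _ IH|z w _ IHz _ IHw|z w _ IHz _ IHw].
- exact: spu.
- by rewrite -u1; apply: spu => //; apply: oner_neq0.
- exact: spN.
- exact: spD.
- by apply: (Span_mul _ IHz IHw).
Qed.

Lemma Span_split (C : D -> Prop) x : Span (fun _ => True) x ->
  exists s p, [/\ Span C s, Span (fun d => ~ C d) p & x = s + p].
Proof.
elim=> [|d d0 _|z _ [s [p [hs hp ->]]]|z w _ [s [p [hs hp ->]]] _ [s' [p' [hs' hp' ->]]]].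
- by exists 0, 0; split; rewrite ?addr0 //; apply: sp0.
- case: (classic (C d)) => Cd.
  + by exists (u d), 0; split; rewrite ?addr0; [apply: spu|apply: sp0|].
  + by exists 0, (u d); split; rewrite ?add0r; [apply: sp0|apply: spu|].
- by exists (- s), (- p); split; [apply: spN|apply: spN|rewrite opprD].
- exists (s + s'), (p + p'); split; try by apply: spD.
  by rewrite addrACA.
Qed.

Lemma sub_0 (C : D -> Prop) : subring C -> C 0.
Proof. by case=> h1 hB _; have := hB _ _ h1 h1; rewrite subrr. Qed.
Lemma sub_N (C : D -> Prop) x : subring C -> C x -> C (- x).
Proof. by move=> hC hx; have := sub_0 hC; case: hC => _ hB _ h0; have := hB _ _ h0 hx; rewrite sub0r. Qed.
Lemma sub_D (C : D -> Prop) x y : subring C -> C x -> C y -> C (x + y).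
Proof. by move=> hC hx hy; have := sub_N hC hy; case: hC => _ hB _ h; have := hB _ _ hx h; rewrite opprK. Qed.
Lemma sub_X (C : D -> Prop) x n : subring C -> C x -> C (x ^+ n).
Proof.
move=> hC hx; elim: n => [|n IH]; first by rewrite expr0; case: hC.
by rewrite exprS; case: hC => _ _ hM; apply: hM.
Qed.

Lemma Span_frac (C : D -> Prop) s : subring C -> Span C s ->
  exists a b, [/\ C a, C b, b != 0 & s = emb a * u b].
Proof.
move=> hC; elim=> [|d d0 Cd|z _ [a [b [Ca Cb b0 ->]]]|z w _ [a [b [Ca Cb b0 ->]]] _ [a' [b' [Ca' Cb' b0' ->]]]].
- by exists 0, 1; split; rewrite ?emb0 ?mul0r ?oner_neq0 //; [apply: sub_0|case: hC].
- by exists 1, d; split; rewrite ?emb1 ?mul1r //; case: hC.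
- by exists (- a), b; split; rewrite ?embN ?mulNr //; apply: sub_N.
- exists (a * b' + a' * b), (b * b'); split.
  + by apply: sub_D => //; case: hC => _ _ hM; apply: hM.
  + by case: hC => _ _ hM; apply: hM.
  + by rewrite mulf_neq0.
  have e0 := emb_neq0 b0; have e0' := emb_neq0 b0'.
  rewrite uM embD !embM mulrDl; congr (_ + _).
    by rewrite mulrACA mulfV // mulr1.
  by rewrite [u b * _]mulrC mulrACA mulfV // mulr1.
Qed.

Lemma Span_in (I : F -> Prop) (A : D -> Prop) x : I 0 -> (forall y, I y -> I (- y)) ->
  (forall y z, I y -> I z -> I (y + z)) ->
  (forall d, d != 0 -> A d -> I (u d)) -> Span A x -> I x.
Proof.
move=> I0 IN ID IA; elim=> [|d d0 Ad|z _ IH|z w _ IHz _ IHw] //.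
- exact: IA.
- exact: IN.
- exact: ID.
Qed.

Lemma Span_zero (I : F -> Prop) (C : D -> Prop) s : subring C ->
  (forall r x, RD r -> I x -> I (r * x)) ->
  (forall b, C b -> b != 0 -> ~ I (u b)) -> Span C s -> I s -> s = 0.
Proof.
move=> hC IM Cn hs Is; have [a [b [Ca Cb b0 se]]] := Span_frac hC hs.
case: (eqVneq a 0) => [a0|a0]; first by rewrite se a0 emb0 mul0r.
exfalso; apply: (Cn b Cb b0).
have := IM _ _ (RD_u a0) Is; rewrite se mulrA mulVf ?mul1r //.
exact: emb_neq0.
Qed.

End Work.


Section Work2.
Variable D : idomainType.
Local Notation F := {fraction D}.
Local Notation u d := ((emb d)^-1).

Section Prime.
Variable P : F -> Prop.
Hypothesis HP : prime_ideal P.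

Lemma pr_RD x : P x -> RD x. Proof. by case: HP => h _ _ _ _; apply: h. Qed.
Lemma pr_0 : P 0. Proof. by case: HP. Qed.
Lemma pr_D x y : P x -> P y -> P (x + y). Proof. by case: HP => _ _ h _ _; apply: h. Qed.
Lemma pr_M r x : RD r -> P x -> P (r * x). Proof. by case: HP => _ _ _ h _; apply: h. Qed.
Lemma pr_Mr r x : P x -> RD r -> P (x * r). Proof. by move=> h1 h2; rewrite mulrC; apply: pr_M. Qed.
Lemma pr_N x : P x -> P (- x).
Proof. by move=> h; rewrite -mulN1r; apply: pr_M => //; apply: RD_N; apply: RD_1. Qed.
Lemma pr_B x y : P x -> P y -> P (x - y).
Proof. by move=> h1 h2; apply: pr_D => //; apply: pr_N. Qed.
Lemma pr_1 : ~ P 1. Proof. by case: HP => _ _ _ _ []. Qed.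
Lemma pr_prime x y : RD x -> RD y -> P (x * y) -> P x \/ P y.
Proof. by case: HP => _ _ _ _ [_ h]; apply: h. Qed.

Lemma pr_pow (f : D) n : f != 0 -> P (u f ^+ n) -> P (u f).
Proof.
move=> f0; elim: n => [|n IH]; first by rewrite expr0 => /pr_1.
rewrite exprS => /pr_prime []; try by [].
- exact: RD_u.
- by apply: RD_X; apply: RD_u.
Qed.

Lemma u_diff (x y : D) : x != 0 -> y != 0 -> x - y != 0 ->
  u (x * y) = u (x - y) * (u y - u x).
Proof.
move=> x0 y0 xy0.
have ex := emb_neq0 x0; have ey := emb_neq0 y0; have exy := emb_neq0 xy0.
have -> : u y - u x = (emb (x - y)) * (u x * u y).
  by rewrite embB mulrBl mulrA mulfV // mul1r mulrCA mulfV // mulr1.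
by rewrite mulrA mulVf // mul1r uM.
Qed.

Lemma LS_nP d : LS P d -> d != 0 -> ~ P (u d).
Proof. by case=> [[_ h]|->] //; rewrite eqxx. Qed.

Lemma notLS d : d != 0 -> ~ LS P d -> P (u d).
Proof. by move=> d0 h; apply: NNPP => h'; apply: h; left. Qed.

Lemma LS_sub : subring (LS P).
Proof.
split.
- left; split; first exact: oner_neq0.
  by rewrite u1; apply: pr_1.
- move=> x y hx hy.
  case: (eqVneq (x - y) 0) => [->|xy0]; [by right|left; split => // Pxy].
  case: (eqVneq x 0) => [x0|x0].
    move: Pxy; rewrite x0 sub0r; move: xy0; rewrite x0 sub0r oppr_eq0 => y0.
    by rewrite uN => /pr_N; rewrite opprK; apply: LS_nP.
  case: (eqVneq y 0) => [y0|y0].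
    by move: Pxy; rewrite y0 subr0; apply: LS_nP.
  have : P (u (x * y)).
    by rewrite (u_diff x0 y0 xy0) mulrC; apply: pr_M => //; apply: RD_D; [apply: RD_u|apply: RD_N; apply: RD_u].
  rewrite uM => /pr_prime [] ; try (by apply: RD_u).
  + exact: LS_nP.
  + exact: LS_nP.
- move=> x y hx hy.
  case: (eqVneq x 0) => [->|x0]; first by right; rewrite mul0r.
  case: (eqVneq y 0) => [->|y0]; first by right; rewrite mulr0.
  left; split; first by rewrite mulf_neq0.
  rewrite uM => /pr_prime [] ; try (by apply: RD_u).
  + exact: LS_nP.
  + exact: LS_nP.
Qed.

Lemma Span_notLS x : Span (fun d => ~ LS P d) x -> P x.
Proof.
apply: Span_in; [exact: pr_0|exact: pr_N|exact: pr_D|].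
by move=> d d0 h; apply: notLS.
Qed.

Lemma prime_Span x : P x -> Span (fun d => ~ LS P d) x.
Proof.
move=> Px; have [s [p [hs hp e]]] := Span_split (LS P) (RD_Span (pr_RD Px)).
have Pp := Span_notLS hp.
have s0 : s = 0.
  apply: (Span_zero LS_sub (I := P)) => //.
  - by move=> r y hr hy; apply: pr_M.
  - by move=> b hb b0; apply: LS_nP.
  by have := pr_B Px Pp; rewrite e addrK.
by rewrite e s0 add0r.
Qed.

End Prime.

Lemma prime_order (P Q : F -> Prop) : prime_ideal P -> prime_ideal Q ->
  incl (LS Q) (LS P) -> incl P Q.
Proof.
move=> hP hQ h x /(prime_Span hP) hx; apply: (Span_notLS hQ).
by apply: (Span_mono _ hx) => d d0 nP Qd; apply: nP; apply: h.
Qed.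

Definition Rf (f : D) (y : F) := exists e r, RD r /\ y = r * emb f ^+ e.

Lemma Rf_LS (Q : F -> Prop) (f d : D) : prime_ideal Q -> f != 0 -> ~ Q (u f) ->
  Rf f (emb d) -> LS Q d.
Proof.
move=> hQ f0 nQ [e [r [hr he]]].
case: (eqVneq d 0) => [->|d0]; [by right|left; split => // Qd].
apply: nQ; apply: (pr_pow hQ (n := e) f0).
have -> : u f ^+ e = r * u d.
  have ef := emb_neq0 f0; have ed := emb_neq0 d0.
  rewrite he invfM mulrA mulfV ?mul1r ?exprVn //.
  apply: contra_neq (ed) => r0; by rewrite he r0 mul0r.
by apply: pr_M.
Qed.

End Work2.


Section Work3.
Variable D : idomainType.
Local Notation F := {fraction D}.
Local Notation u d := ((emb d)^-1).
Variable pf : D -> F -> Prop.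
Hypothesis Hpf : forall f : D, f != 0 -> max_prime_avoiding f (pf f).

Definition ideal (J : F -> Prop) := [/\ incl J (@RD D), J 0,
  (forall x y, J x -> J y -> J (x + y)) & (forall r x, RD r -> J x -> J (r * x))].

Lemma ML_sub (f c : D) : f != 0 -> LS (pf f) c -> Rf f (emb c).
Proof.
move=> f0 hc; have [Ppr Pnf Pmax] := Hpf f0; set P := pf f in Ppr Pnf Pmax hc *.
case: (eqVneq c 0) => [->|c0].
  by exists 0%N, 0; split; [apply: RD_0|rewrite emb0 mul0r].
apply: NNPP => nR; have nPc : ~ P (u c) by apply: LS_nP.
have hLf : LS P f by left.
pose I x := exists p r, [/\ P p, RD r & x = p + r * u c].
have IS : forall e, ~ I (u f ^+ e).
  move=> e [p [r [Pp Rr E]]].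
  have [s [p' [hs hp' er]]] := Span_split (LS P) (RD_Span Rr).
  have Pp' := Span_notLS Ppr hp'.
  have key : s * u c - u f ^+ e = 0.
    apply: (Span_zero (LS_sub Ppr) (I := P)).
    - by move=> r0 y hr hy; apply: pr_M.
    - by move=> b hb b0; apply: LS_nP.
    - apply: Span_B.
        apply: (Span_mul _ hs (spu c0 hc)) => a b a0 b0 ha hb.
        by case: (LS_sub Ppr) => _ _ hM; apply: hM.
      rewrite -uX; apply: spu; first by rewrite expf_neq0.
      by apply: sub_X => //; apply: LS_sub.
    have -> : s * u c - u f ^+ e = - (p + p' * u c).
      by rewrite E er; ring.
    apply: pr_N => //; apply: pr_D => //; apply: pr_Mr => //; exact: RD_u.
  apply: nR; exists e, s; split; first exact: (Span_RD hs).
  have ec := emb_neq0 c0; have ef := expf_neq0 e (emb_neq0 f0).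
  move/eqP: key; rewrite subr_eq0 exprVn => /eqP key.
  have : s * u c * emb c * emb f ^+ e = (emb f ^+ e)^-1 * emb c * emb f ^+ e by rewrite key.
  by rewrite -[s * u c * emb c]mulrA mulVf // mulr1 mulrAC mulVf // mul1r => ->.
pose Good J := [/\ ideal J, incl I J & forall e, ~ J (u f ^+ e)].
pose Pz (J : F -> Prop) := J = (fun _ => False) \/ Good J.
have GoodI : Good I.
  split; last exact: IS.
  - split.
    + move=> x [p [r [Pp Rr ->]]]; apply: RD_D; first exact: pr_RD Pp.
      by apply: RD_M => //; apply: RD_u.
    + by exists 0, 0; split; [apply: pr_0|apply: RD_0|rewrite mul0r addr0].
    + move=> x y [p [r [Pp Rr ->]]] [p' [r' [Pp' Rr' ->]]].
      exists (p + p'), (r + r'); split; [exact: pr_D|exact: RD_D|].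
      by rewrite mulrDl addrACA.
    + move=> t x Rt [p [r [Pp Rr ->]]].
      exists (t * p), (t * r); split; [exact: pr_M|exact: RD_M|].
      by rewrite mulrDr mulrA.
  - by move=> x.
have [A [PzA Amax]] : exists A, Pz A /\ forall B, classical_sets.proper A B -> ~ Pz B.
  apply: classical_sets.Zorn_bigcup => Fc FcP tot.
  have memG : forall X x, Fc X -> X x -> Good X.
    by move=> X x FX Xx; case: (FcP X FX) => // X0; move: Xx; rewrite X0.
  case: (classic (exists X, Fc X /\ Good X)) => [[X0 [FX0 GX0]]|nG].
    right; split.
    - split.
      + move=> x [X FX Xx]; have [[hR _ _ _] _ _] := memG X x FX Xx; exact: hR.
      + by exists X0 => //; case: GX0 => [[]].
      + move=> x y [X FX Xx] [Y FY Yy].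
        case: (tot X Y FX FY) => [XY|YX].
        * exists Y => //; have [[_ _ hD _] _ _] := memG Y y FY Yy.
          by apply: hD => //; apply: XY.
        * exists X => //; have [[_ _ hD _] _ _] := memG X x FX Xx.
          by apply: hD => //; apply: YX.
      + move=> r x Rr [X FX Xx]; exists X => //.
        by have [[_ _ _ hM] _ _] := memG X x FX Xx; apply: hM.
    - by move=> x Ix; exists X0 => //; case: GX0 => _ h _; apply: h.
    - by move=> e [X FX Xx]; have [_ _ h] := memG X _ FX Xx; apply: (h e).
  left; apply: functional_extensionality => x; apply: propositional_extensionality.
  split => // -[X FX Xx]; apply: nG; exists X; split => //; exact: memG Xx.
have GA : Good A.
  case: PzA => // A0; exfalso; apply: (Amax I); last by right.
  split; first by rewrite A0.
  move=> h; have := h 0; rewrite A0; apply.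
  by case: GoodI => [[]].
have Amax' : forall B, Good B -> incl A B -> incl B A.
  move=> B GB AB; apply: NNPP => nBA; apply: (Amax B); last by right.
  by split.
case: GA => [[AR A0 AD AM] IA AS].
have ext : forall z, RD z -> ~ A z -> exists e a r, [/\ A a, RD r & u f ^+ e = a + r * z].
  move=> z Rz nAz; apply: NNPP => h.
  pose B w := exists a r, [/\ A a, RD r & w = a + r * z].
  have : incl B A.
    apply: Amax'.
    + split.
      * split.
        -- by move=> w [a [r [Aa Rr ->]]]; apply: RD_D; [exact: AR|exact: RD_M].
        -- by exists 0, 0; split; [|apply: RD_0|rewrite mul0r addr0].
        -- move=> x y [a [r [Aa Rr ->]]] [a' [r' [Aa' Rr' ->]]].
           exists (a + a'), (r + r'); split; [exact: AD|exact: RD_D|].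
           by rewrite mulrDl addrACA.
        -- move=> t x Rt [a [r [Aa Rr ->]]].
           exists (t * a), (t * r); split; [exact: AM|exact: RD_M|].
           by rewrite mulrDr mulrA.
      * move=> w Iw; exists w, 0; split; [exact: IA|apply: RD_0|by rewrite mul0r addr0].
      * by move=> e [a [r [Aa Rr E]]]; apply: h; exists e, a, r.
    + by move=> w Aw; exists w, 0; split; [|apply: RD_0|rewrite mul0r addr0].
  move=> BA; apply: nAz; apply: BA; exists 0, 1; split; [exact: A0|exact: RD_1|].
  by rewrite add0r mul1r.
have Apr : prime_ideal A.
  split => //; split.
    by move=> A1; apply: (AS 0%N); rewrite expr0.
  move=> x y Rx Ry Axy; apply: NNPP => nxy.
  have [e1 [a1 [r1 [Aa1 Rr1 E1]]]] := ext x Rx (fun h => nxy (or_introl h)).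
  have [e2 [a2 [r2 [Aa2 Rr2 E2]]]] := ext y Ry (fun h => nxy (or_intror h)).
  apply: (AS (e1 + e2)%N); rewrite exprD E1 E2.
  have -> : (a1 + r1 * x) * (a2 + r2 * y) =
            (a2 + r2 * y) * a1 + ((r1 * x) * a2 + (r1 * r2) * (x * y)) by ring.
  apply: (AD); first by apply: (AM) => //; apply: RD_D; [exact: AR|exact: RD_M].
  by apply: (AD); apply: (AM) => //; apply: RD_M.
have PA : incl P A.
  by move=> p Pp; apply: IA; exists p, 0; split; [|apply: RD_0|rewrite mul0r addr0].
have nAf : ~ A (u f) by move=> h; apply: (AS 1%N); rewrite expr1.
have AP := Pmax A Apr nAf PA.
apply: nPc; apply: AP; apply: IA; exists 0, 1; split; [exact: pr_0|exact: RD_1|].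
by rewrite add0r mul1r.
Qed.

End Work3.


Section Work4.
Variable D : idomainType.
Local Notation F := {fraction D}.
Local Notation u d := ((emb d)^-1).

Inductive SpanM (W : D -> Prop) : F -> Prop :=
| sm0 : SpanM W 0
| smg w d : W w -> d != 0 -> SpanM W (emb w * u d)
| smN x : SpanM W x -> SpanM W (- x)
| smD x y : SpanM W x -> SpanM W y -> SpanM W (x + y).

Lemma SpanM_mulu (W : D -> Prop) y g : g != 0 -> SpanM W y -> SpanM W (y * u g).
Proof.
move=> g0; elim=> [|w d Ww d0|z _ IH|z t _ IHz _ IHt].
- by rewrite mul0r; apply: sm0.
- by rewrite -mulrA -uM; apply: smg => //; rewrite mulf_neq0.
- by rewrite mulNr; apply: smN.
- by rewrite mulrDl; apply: smD.
Qed.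

Lemma Span_mul_emb (W A : D -> Prop) r w : Span A r -> W w -> SpanM W (r * emb w).
Proof.
move=> hr Ww; elim: hr => [|d d0 _|z _ IH|z t _ IHz _ IHt].
- by rewrite mul0r; apply: sm0.
- by rewrite mulrC; apply: smg.
- by rewrite mulNr; apply: smN.
- by rewrite mulrDl; apply: smD.
Qed.

Lemma SpanM_single (w0 : D) y : SpanM (fun z => z = w0) y -> exists r, RD r /\ y = r * emb w0.
Proof.
elim=> [|w d -> d0|z _ [r [Rr ->]]|z t _ [r [Rr ->]] _ [r' [Rr' ->]]].
- by exists 0; split; [apply: RD_0|rewrite mul0r].
- by exists (u d); split; [apply: RD_u|rewrite mulrC].
- by exists (- r); split; [apply: RD_N|rewrite mulNr].
- by exists (r + r'); split; [apply: RD_D|rewrite mulrDl].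
Qed.

Lemma SpanM_mon (W : D -> Prop) y : mult_submonoid W -> SpanM W y ->
  exists w r, [/\ W w, RD r & y = r * emb w].
Proof.
case=> W1 WM; elim=> [|w d Ww d0|z _ [w [r [Ww Rr ->]]]|z t _ [w [r [Ww Rr ->]]] _ [w' [r' [Ww' Rr' ->]]]].
- by exists 1, 0; split; [|apply: RD_0|rewrite mul0r].
- by exists w, (u d); split; [|apply: RD_u|rewrite mulrC].
- by exists w, (- r); split; [|apply: RD_N|rewrite mulNr].
- case: (eqVneq w 0) => [w0|w0].
    by exists w', r'; split => //; rewrite w0 emb0 mulr0 add0r.
  case: (eqVneq w' 0) => [w'0|w'0].
    by exists w, r; split => //; rewrite w'0 emb0 mulr0 addr0.
  exists (w * w'), (r * u w' + r' * u w); split; first exact: WM.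
    by apply: RD_D; apply: RD_M => //; apply: RD_u.
  have e1 := emb_neq0 w0; have e2 := emb_neq0 w'0.
  rewrite embM mulrDl; congr (_ + _).
    by rewrite [emb w * _]mulrC mulrA mulfVK.
  by rewrite mulrA mulfVK.
Qed.

Definition H0 (W : D -> Prop) : D -> Prop := fun x => SpanM W (emb x).

Lemma H0_factroid W : factroid (H0 W).
Proof.
split.
- by rewrite /H0 emb0; apply: sm0.
- by move=> x y hx hy; rewrite /H0 embB; apply: smD => //; apply: smN.
- move=> f g f0 g0; rewrite /H0 embM => h; split.
  + by have := SpanM_mulu g0 h; rewrite mulfK //; apply: emb_neq0.
  + by have := SpanM_mulu f0 h; rewrite [emb f * _]mulrC mulfK //; apply: emb_neq0.
Qed.

Lemma H0_regular W : regular_factroid (H0 W).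
Proof.
split; first exact: H0_factroid.
move=> g g0; apply: functional_extensionality => y; apply: propositional_extensionality.
have eg := emb_neq0 g0.
split; last by move=> hy K _ hK; apply: hK; exists y.
move=> hgen.
pose K z := SpanM W (emb z * u g).
have hK : factroid K.
  split.
  - by rewrite /K emb0 mul0r; apply: sm0.
  - by move=> a b ha hb; rewrite /K embB mulrBl; apply: smD => //; apply: smN.
  - move=> a b a0 b0; rewrite /K embM => h; split.
    + by have := SpanM_mulu b0 h; rewrite mulrAC mulfK //; apply: emb_neq0.
    + by have := SpanM_mulu a0 h; rewrite [emb a * _]mulrC mulrAC mulfK //; apply: emb_neq0.
have := hgen K hK.
have : incl (fun z => exists h, H0 W h /\ z = g * h) K.
  by move=> z [h [hh ->]]; rewrite /K embM [emb g * _]mulrC mulfK.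
move=> hi /(_ hi); by rewrite /K embM [emb g * _]mulrC mulfK.
Qed.

Lemma gen_N (S : D -> Prop) z : factroid_gen S z -> factroid_gen S (- z).
Proof.
move=> h K hK hS; case: (hK) => K0 KB _; have := KB _ _ K0 (h K hK hS).
by rewrite sub0r.
Qed.

Lemma gen_D (S : D -> Prop) z t : factroid_gen S z -> factroid_gen S t -> factroid_gen S (z + t).
Proof.
move=> h1 h2 K hK hS; case: (hK) => K0 KB _.
have := KB _ _ (h1 K hK hS) (KB _ _ K0 (h2 K hK hS)).
by rewrite sub0r opprK.
Qed.

Lemma gen_scale (H : D -> Prop) g1 g2 z : g2 != 0 ->
  factroid_gen (fun t => exists h, H h /\ t = g1 * h) z ->
  factroid_gen (fun t => exists h, H h /\ t = (g1 * g2) * h) (z * g2).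
Proof.
move=> g20 hz K hK hS.
pose K' t := K (t * g2).
apply: (hz K').
- case: (hK) => K0 KB KF; split.
  + by rewrite /K' mul0r.
  + by move=> a b ha hb; rewrite /K' mulrBl; apply: KB.
  + move=> a b a0 b0; rewrite /K' => h; split.
    * have e : a * g2 * b = a * b * g2 by rewrite mulrAC.
      by have := KF (a * g2) b (mulf_neq0 a0 g20) b0; rewrite e => /(_ h) [].
    * have e : b * g2 * a = a * b * g2 by rewrite mulrC mulrA.
      by have := KF (b * g2) a (mulf_neq0 b0 g20) a0; rewrite e => /(_ h) [].
- move=> t [h [hh ->]]; apply: hS; exists h; split => //.
  by rewrite mulrAC.
Qed.

Lemma Gcl_char W : Gcl W = H0 W.
Proof.
apply: functional_extensionality => x; apply: propositional_extensionality; split.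
  move=> h; apply: h; first exact: H0_regular.
  by move=> w Ww; rewrite /H0 -[emb w]mulr1 -u1; apply: smg => //; apply: oner_neq0.
move=> hx H [HF Hreg] WH.
have key : forall y, SpanM W y -> exists g z, [/\ g != 0, y * emb g = emb z &
    factroid_gen (fun t => exists h, H h /\ t = g * h) z].
  move=> y; elim=> [|w d Ww d0|z _ [g [t [g0 E ht]]]|z z' _ [g [t [g0 E ht]]] _ [g' [t' [g0' E' ht']]]].
  - exists 1, 0; split; [exact: oner_neq0|by rewrite mul0r emb0|].
    by move=> K [K0 _ _] _.
  - exists d, w; split => //; first by rewrite mulfVK //; apply: emb_neq0.
    move=> K hK hS; case: (eqVneq w 0) => [->|w0]; first by case: hK.
    case: hK => _ _ KF.
    have : K (d * w) by apply: hS; exists w; split => //; apply: WH.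
    by move=> /(KF _ _ d0 w0) [].
  - by exists g, (- t); split => //; [rewrite mulNr E embN|apply: gen_N].
  - exists (g * g'), (t * g' + t' * g); split; first by rewrite mulf_neq0.
    + rewrite embD !embM mulrDl mulrA E; congr (_ + _).
      by rewrite [emb g * _]mulrC mulrA E'.
    + apply: gen_D; first exact: gen_scale.
      by rewrite mulrC; apply: gen_scale.
have [g [z [g0 E hz]]] := key _ hx.
have ex : z = g * x by apply: emb_inj; rewrite -E embM mulrC.
rewrite ex in hz; by rewrite -(Hreg g g0).
Qed.

End Work4.


Section Work5.
Variable D : idomainType.
Local Notation F := {fraction D}.
Local Notation u d := ((emb d)^-1).
Variable pf : D -> F -> Prop.
Hypothesis Hpf : forall f : D, f != 0 -> max_prime_avoiding f (pf f).

Lemma pf_prime f : f != 0 -> prime_ideal (pf f). Proof. by case/Hpf. Qed.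
Lemma pf_avoid f : f != 0 -> ~ pf f (u f). Proof. by case/Hpf. Qed.

Lemma ML f : f != 0 -> LS (pf f) = fun d => Rf f (emb d).
Proof.
move=> f0; apply: functional_extensionality => d; apply: propositional_extensionality.
split; first exact: ML_sub.
by apply: Rf_LS; [apply: pf_prime|exact: f0|apply: pf_avoid].
Qed.

Lemma below_pf (Q : F -> Prop) f : prime_ideal Q -> f != 0 -> ~ Q (u f) -> incl Q (pf f).
Proof.
move=> hQ f0 nQ; apply: prime_order => //; first exact: pf_prime.
by move=> d; rewrite (ML f0); apply: Rf_LS.
Qed.

Lemma pf_dir f g : f != 0 -> g != 0 -> incl (pf (f * g)) (pf f).
Proof.
move=> f0 g0; have fg0 : f * g != 0 by rewrite mulf_neq0.
apply: below_pf => //; first exact: pf_prime.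
move=> h; apply: (pf_avoid fg0); rewrite uM.
by apply: pr_Mr => //; [apply: pf_prime|apply: RD_u].
Qed.

Lemma mon_X (W : D -> Prop) f n : mult_submonoid W -> W f -> W (f ^+ n).
Proof.
case=> W1 WM Wf; elim: n => [|n IH]; first by rewrite expr0.
by rewrite exprS; apply: WM.
Qed.

Lemma pW_prime W : mult_submonoid W -> prime_ideal (pW pf W).
Proof.
move=> hW; have [W1 WM] := hW; have o0 : (1 : D) != 0 := oner_neq0 _.
split.
- by move=> x h; apply: (pr_RD (pf_prime o0)); apply: h.
- by move=> f Wf f0; apply: pr_0; apply: pf_prime.
- by move=> x y hx hy f Wf f0; apply: pr_D; [apply: pf_prime|apply: hx|apply: hy].
- by move=> r x Rr hx f Wf f0; apply: pr_M; [apply: pf_prime| |apply: hx].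
split.
- by move=> h; apply: (pf_avoid o0); rewrite u1; apply: h.
move=> x y Rx Ry hxy; apply: NNPP => nxy.
have [f [Wf [f0 nf]]] : exists f, W f /\ f != 0 /\ ~ pf f x.
  apply: NNPP => h; apply: nxy; left => f Wf f0; apply: NNPP => nf; apply: h; by exists f.
have [g [Wg [g0 ng]]] : exists g, W g /\ g != 0 /\ ~ pf g y.
  apply: NNPP => h; apply: nxy; right => g Wg g0; apply: NNPP => ng; apply: h; by exists g.
have fg0 : f * g != 0 by rewrite mulf_neq0.
have := pr_prime (pf_prime fg0) Rx Ry (hxy _ (WM _ _ Wf Wg) fg0).
case=> h.
- by apply: nf; apply: pf_dir h.
- by apply: ng; apply: (pf_dir g0 f0); rewrite mulrC.
Qed.

Lemma LS_pW W : mult_submonoid W -> LS (pW pf W) = H0 W.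
Proof.
move=> hW; apply: functional_extensionality => x; apply: propositional_extensionality.
split.
- case=> [[x0 nP]|->]; last by rewrite /H0 emb0; apply: sm0.
  have [f [Wf [f0 nf]]] : exists f, W f /\ f != 0 /\ ~ pf f (u x).
    apply: NNPP => h; apply: nP => f Wf f0; apply: NNPP => nf; apply: h; by exists f.
  have : LS (pf f) x by left.
  rewrite (ML f0) /H0 => -[e [r [Rr ->]]].
  by rewrite -embX; apply: (Span_mul_emb (RD_Span Rr)); apply: mon_X.
- move=> hx; have [w [r [Ww Rr E]]] := SpanM_mon hW hx.
  case: (eqVneq x 0) => [->|x0]; [by right|left; split => // hall].
  have w0 : w != 0.
    by apply: contra_neq (emb_neq0 x0) => w0; rewrite E w0 emb0 mulr0.
  have : LS (pf w) x by rewrite (ML w0); exists 1%N, r; rewrite expr1.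
  by move/LS_nP => /(_ x0); apply; apply: hall.
Qed.

Lemma Gcl_reg (C : D -> Prop) : regular_factroid C -> Gcl C = C.
Proof.
move=> hC; apply: functional_extensionality => x; apply: propositional_extensionality.
by split; [move=> h; apply: h|move=> h H _ HC; apply: HC].
Qed.

Lemma sub_mon (C : D -> Prop) : subring C -> mult_submonoid C.
Proof. by case. Qed.

Lemma part_e (q : F -> Prop) : prime_ideal q -> pW pf (LS q) = q.
Proof.
move=> hq; apply: functional_extensionality => x; apply: propositional_extensionality.
have hsub := LS_sub hq.
split; last first.
  by move=> qx f hf f0; apply: (below_pf hq f0) => //; apply: LS_nP.
move=> hx.
have o0 : (1 : D) != 0 := oner_neq0 _.
have L1 : LS q 1 by case: hsub.
have Rx : RD x by apply: (pr_RD (pf_prime o0)); apply: hx.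
have [s [p [hs hp E]]] := Span_split (LS q) (RD_Span Rx).
have qp : q p by apply: Span_notLS.
have hWp : pW pf (LS q) p.
  move=> f hf f0; have hpr := pf_prime f0.
  move: hp; apply: Span_in; [exact: pr_0 hpr|exact: pr_N hpr|exact: pr_D hpr|].
  move=> d d0 nd; apply: (notLS d0) => hd; apply: nd.
  move: hd; rewrite (ML f0); apply: Rf_LS => //; exact: LS_nP.
have hpr := pW_prime (sub_mon hsub).
have s0 : s = 0.
  apply: (Span_zero hsub (I := pW pf (LS q))) => //.
  - by move=> r y hr hy; apply: (pr_M hpr).
  - by move=> b hb b0 h; apply: (pf_avoid b0); apply: h.
  by have := pr_B hpr hx hWp; rewrite E addrK.
by rewrite E s0 add0r.
Qed.

Lemma RC_Span (C : D -> Prop) s : subring C -> RC C s -> Span C s.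
Proof.
move=> hC; elim=> [y [c [Cc c0 ->]]||z _ IH|z w _ IHz _ IHw|z w _ IHz _ IHw].
- exact: spu.
- by rewrite -u1; apply: spu; [apply: oner_neq0|case: hC].
- exact: spN.
- exact: spD.
- apply: (Span_mul _ IHz IHw) => a b _ _ ha hb; by case: hC => _ _ hM; apply: hM.
Qed.

Lemma Span_RC (C : D -> Prop) s : Span C s -> RC C s.
Proof.
apply: Span_in.
- by have := rg_add (rg_one (fun x => exists c, [/\ C c, c != 0 & x = u c]))
             (rg_opp (rg_one _)); rewrite subrr.
- exact: rg_opp.
- exact: rg_add.
- by move=> d d0 Cd; apply: rg_base; exists d.
Qed.

End Work5.


Unset Implicit Arguments.
Set Strict Implicit.

Theorem mainTheorem16 (D : idomainType)
  (pf : D -> {fraction D} -> Prop)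
  (Hpf : forall f : D, f != 0 -> max_prime_avoiding f (pf f)) :
  (* (a) *)
  (forall (S : {fraction D} -> Prop) (W : D -> Prop),
     union_of_primes S -> mult_submonoid W ->
     (incl W (LS S) <-> incl S (pW pf W))) /\
  (* (b) antitone Galois connection between M and U *)
  ((forall W : D -> Prop, mult_submonoid W -> union_of_primes (pW pf W)) /\
   (forall S : {fraction D} -> Prop, union_of_primes S -> mult_submonoid (LS S)) /\
   (forall W1 W2 : D -> Prop, mult_submonoid W1 -> mult_submonoid W2 ->
      incl W1 W2 -> incl (pW pf W2) (pW pf W1)) /\
   (forall S1 S2 : {fraction D} -> Prop, union_of_primes S1 -> union_of_primes S2 ->
      incl S1 S2 -> incl (LS S2) (LS S1)) /\
   (forall (S : {fraction D} -> Prop) (W : D -> Prop), union_of_primes S -> mult_submonoid W ->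
     (incl W (LS S) <-> incl S (pW pf W)))) /\
  (* (c) *)
  (forall W : D -> Prop, mult_submonoid W -> LS (pW pf W) = Gcl W) /\
  (* (d) *)
  (forall f : D, f != 0 ->
     LS (pf f) = (fun x => exists e : nat, Gx (f ^+ e) x)) /\
  (* (e) *)
  (forall q : {fraction D} -> Prop, prime_ideal q -> pW pf (LS q) = q) /\
  (* (f) *)
  (forall C : D -> Prop, subring C -> regular_factroid C -> C = LS (pW pf C)) /\
  (* the restricted correspondence is well defined *)
  (forall C : D -> Prop, subring C -> regular_factroid C -> prime_ideal (pW pf C)) /\
  (forall q : {fraction D} -> Prop, prime_ideal q -> subring (LS q) /\ regular_factroid (LS q)) /\
  (* R(C) -> R -> R/q is an isomorphism when q = p(C) *)
  (forall C : D -> Prop, subring C -> regular_factroid C ->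
     (forall s, RC C s -> pW pf C s -> s = 0) /\
     (forall r, @RD D r -> exists s, RC C s /\ pW pf C (r - s))).
Proof.
have partA : forall (S : {fraction D} -> Prop) (W : D -> Prop),
     union_of_primes S -> mult_submonoid W ->
     (incl W (LS S) <-> incl S (pW pf W)).
  move=> S W [Fam [FamP FamS]] hW; split.
  - move=> WL x Sx f Wf f0.
    have [P [FP Px]] := (FamS x).1 Sx.
    apply: (below_pf Hpf (FamP P FP) f0) => //.
    move=> Pf; case: (WL f Wf) => [[_ nS]|f00]; last by rewrite f00 eqxx in f0.
    by apply: nS; apply/(FamS _).2; exists P.
  - move=> SW w Ww; case: (eqVneq w 0) => [->|w0]; [by right|left; split => // Sw].
    exact: (pf_avoid Hpf w0 (SW _ Sw w Ww w0)).
have partC : forall W, mult_submonoid W -> LS (pW pf W) = Gcl W.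
  by move=> W hW; rewrite Gcl_char (LS_pW Hpf hW).
split; first exact: partA.
split.
  split.
    move=> W hW; exists (fun P => P = pW pf W); split; first by move=> P ->; apply: pW_prime.
    by move=> x; split; [exists (pW pf W)|case=> P [-> h]].
  split.
    move=> S [Fam [FamP FamS]]; split.
    - left; split; first exact: oner_neq0.
      move=> S1; rewrite u1 in S1; have [P [FP P1]] := (FamS _).1 S1.
      exact: (pr_1 (FamP P FP) P1).
    - move=> x y hx hy.
      case: (eqVneq x 0) => [->|x0]; first by right; rewrite mul0r.
      case: (eqVneq y 0) => [->|y0]; first by right; rewrite mulr0.
      left; split; first by rewrite mulf_neq0.
      rewrite uM => Sxy; have [P [FP Pxy]] := (FamS _).1 Sxy.
      have hP := FamP P FP.
      case: (pr_prime hP (RD_u x0) (RD_u y0) Pxy) => h.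
      + case: hx => [[_ nS]|x00]; last by rewrite x00 eqxx in x0.
        by apply: nS; apply/(FamS _).2; exists P.
      + case: hy => [[_ nS]|y00]; last by rewrite y00 eqxx in y0.
        by apply: nS; apply/(FamS _).2; exists P.
  split.
    by move=> W1 W2 _ _ h x hx f Wf f0; apply: hx => //; apply: h.
  split.
    move=> S1 S2 _ _ h x [[x0 nS]|->]; [left; split => // s; apply: nS; exact: h|by right].
  exact: partA.
split; first exact: partC.
split.
  move=> f f0; rewrite (ML Hpf f0); apply: functional_extensionality => x.
  apply: propositional_extensionality.
  rewrite /Gx; split.
  - case=> e [r [Rr E]]; exists e; rewrite Gcl_char /H0 E -embX.
    exact: (Span_mul_emb (RD_Span Rr)).
  - case=> e; rewrite Gcl_char /H0 => /SpanM_single [r [Rr E]].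
    by exists e, r; rewrite E embX.
split; first by move=> q hq; apply: part_e.
split.
  by move=> C hC hreg; rewrite (partC C (sub_mon hC)) (Gcl_reg hreg).
split; first by move=> C hC _; apply: pW_prime => //; apply: sub_mon.
split.
  move=> q hq; split; first exact: LS_sub.
  have -> : LS q = H0 (LS q).
    by rewrite -(LS_pW Hpf (sub_mon (LS_sub hq))) (part_e Hpf hq).
  exact: H0_regular.
move=> C hC hreg.
have hpr := pW_prime Hpf (sub_mon hC).
have LC : LS (pW pf C) = C by rewrite (partC C (sub_mon hC)) (Gcl_reg hreg).
split.
  move=> s /(RC_Span hC) hs hp.
  apply: (Span_zero hC (I := pW pf C)) => //.
  - by move=> r y hr hy; apply: (pr_M hpr).
  - by move=> b hb b0 h; apply: (pf_avoid Hpf b0); apply: h.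
move=> r Rr; have [s [p [hs hp E]]] := Span_split C (RD_Span Rr).
exists s; split; first exact: Span_RC.
rewrite E addrC addKr.
move: hp; apply: Span_in; [exact: pr_0 hpr|exact: pr_N hpr|exact: pr_D hpr|].
move=> d d0 nC; apply: (notLS (P := pW pf C) d0); by rewrite LC.
Qed.
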